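(* Let $\bm\delta=(\delta_1,\dots,\delta_4)$ be fixed positive reals and let $R_1,\dots,R_5\subseteq\mathbb{R}^2$ with $|R_i|\le n$ for every $i\in[5]$. If the number of pairs $(r_1,r_2)\in R_1\times R_2$ with $\|r_1-r_2\|=\delta_1$ is $O(n)$, or the number of pairs $(r_4,r_5)\in R_4\times R_5$ with $\|r_4-r_5\|=\delta_4$ is $O(n)$, then $C_4(R_1,\dots,R_5)=O\left(n\cdot u_2(n,n)\right)$.
   Context: For sets $P_1,\dots,P_5\subseteq\mathbb{R}^2$, $C_4(P_1,\dots,P_5)$ is the number of $5$-tuples $(p_1,\dots,p_5)$ with $p_i\in P_i$, $\|p_i-p_{i+1}\|=\delta_i$ for $i\in[4]$, and $p_i\ne p_j$ for $i\ne j$. $u_2(m,n)$ denotes the maximum, over sets $A$ of $m$ points and $B$ of $n$ points in $\mathbb{R}^2$, of the number of pairs $(a,b)\in A\times B$ at a given fixed distance (the maximum number of incidences between $m$ points and $n$ circles of a fixed radius). *)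

(* Defs.v *)
From HB Require Import structures.
From mathcomp Require Import all_boot all_order all_algebra.
From mathcomp Require Import boolp classical_sets reals.
Set Implicit Arguments. Unset Strict Implicit. Unset Printing Implicit Defensive.
Import Order.TTheory GRing.Theory Num.Theory.
Local Open Scope ring_scope.
Local Open Scope classical_set_scope.

Definition dist2 (R : realType) (p q : R * R) : R :=
  Num.sqrt ((p.1 - q.1) ^+ 2 + (p.2 - q.2) ^+ 2).

(* Number of pairs (a,b) in A x B with ||a - b|| = d. Finite point sets are
   duplicate-free sequences. *)
Definition pair_count (R : realType) (d : R) (A B : seq (R * R)) : nat :=
  count (fun ab : (R * R) * (R * R) => dist2 ab.1 ab.2 == d)
        [seq (a, b) | a <- A, b <- B].

Definition C4 (R : realType) (d1 d2 d3 d4 : R)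
    (P1 P2 P3 P4 P5 : seq (R * R)) : nat :=
  count (fun t : seq (R * R) =>
           match t with
           | [:: p1; p2; p3; p4; p5] =>
               [&& dist2 p1 p2 == d1, dist2 p2 p3 == d2,
                   dist2 p3 p4 == d3, dist2 p4 p5 == d4 & uniq t]
           | _ => false
           end)
    [seq p1 :: t1 | p1 <- P1, t1 <-
      [seq p2 :: t2 | p2 <- P2, t2 <-
        [seq p3 :: t3 | p3 <- P3, t3 <-
          [seq p4 :: t4 | p4 <- P4, t4 <- [seq [:: p5] | p5 <- P5]]]]].

(* u_2(m,n): maximum number of unit-distance pairs between a set of m points
   and a set of n points in the plane (the fixed distance is normalized to 1;
   by scaling the value is the same for any positive distance). *)
Definition u2 (R : realType) (m n : nat) : R :=
  sup [set x : R | exists A B : seq (R * R),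
         [/\ uniq A, uniq B, size A = m, size B = n &
             x = (pair_count 1 A B)%:R]].

(* Main.v *)
Require Import Defs.
From HB Require Import structures.
From mathcomp Require Import all_boot all_order all_algebra.
From mathcomp Require Import boolp classical_sets reals.
From mathcomp Require Import ring lra.
Set Implicit Arguments. Unset Strict Implicit.
Import Order.TTheory GRing.Theory Num.Theory.
Local Open Scope ring_scope.
Lemma count_allpairs_sum (S T U : Type) (f : S -> T -> U) (P : pred U) s t :
  count P [seq f x y | x <- s, y <- t] = (\sum_(x <- s) count (fun y => P (f x y)) t)%N.
Proof.
elim: s => [|x s IH]; first by rewrite big_nil.
by rewrite allpairs_cons count_cat count_map IH big_cons.
Qed.

Lemma count_sumb (T : Type) (P : pred T) s : count P s = (\sum_(x <- s) P x)%N.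
Proof. by elim: s => [|x s IH]; rewrite ?big_nil ?big_cons //= IH. Qed.

Lemma dist2_eq (R : realType) (p q : R*R) (d : R) : 0 < d ->
  (dist2 p q == d) = ((p.1 - q.1)^+2 + (p.2 - q.2)^+2 == d^+2).
Proof.
move=> hd; rewrite /dist2.
have h0 : 0 <= (p.1 - q.1)^+2 + (p.2 - q.2)^+2 by rewrite addr_ge0 ?sqr_ge0.
apply/eqP/eqP => [<-|->]; first by rewrite sqr_sqrtr.
by rewrite sqrtr_sqr ger0_norm // ltW.
Qed.

Lemma perp (R : realType) (w1 w2 u1 u2 v1 v2 : R) :
  (w1 != 0) || (w2 != 0) -> w1*u1 + w2*u2 = 0 -> w1*v1 + w2*v2 = 0 ->
  u1*v2 - u2*v1 = 0.
Proof.
move=> /orP [] hw hu hv.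
- apply: (mulfI hw); rewrite mulr0.
  have -> : w1 * (u1*v2 - u2*v1) = v2*(w1*u1+w2*u2) - u2*(w1*v1+w2*v2) by ring.
  by rewrite hu hv !mulr0 subrr.
- apply: (mulfI hw); rewrite mulr0.
  have -> : w2 * (u1*v2 - u2*v1) = u1*(w1*v1+w2*v2) - v1*(w1*u1+w2*u2) by ring.
  by rewrite hu hv !mulr0 subrr.
Qed.

Lemma two_circles (R : realType) (c1 c2 e1 e2 x1 x2 y1 y2 z1 z2 r r' : R) :
  (c1, c2) != (e1, e2) -> (x1, x2) != (y1, y2) -> (x1, x2) != (z1, z2) ->
  (y1, y2) != (z1, z2) ->
  (c1 - x1)^+2 + (c2 - x2)^+2 = r -> (c1 - y1)^+2 + (c2 - y2)^+2 = r ->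
  (c1 - z1)^+2 + (c2 - z2)^+2 = r ->
  (x1 - e1)^+2 + (x2 - e2)^+2 = r' -> (y1 - e1)^+2 + (y2 - e2)^+2 = r' ->
  (z1 - e1)^+2 + (z2 - e2)^+2 = r' -> False.
Proof.
rewrite !xpair_eqE !negb_and => hce hxy hxz hyz hx hy hz hx' hy' hz'.
set u1 := e1 - c1; set u2 := e2 - c2.
have Exy : (x1 - y1) * u1 + (x2 - y2) * u2 = 0 by rewrite /u1 /u2; lra.
have Exz : (x1 - z1) * u1 + (x2 - z2) * u2 = 0 by rewrite /u1 /u2; lra.
have Eyz : (y1 - z1) * u1 + (y2 - z2) * u2 = 0 by rewrite /u1 /u2; lra.
have Fxy : (x1 - y1) * (x1 + y1 - 2 * c1) + (x2 - y2) * (x2 + y2 - 2 * c2) = 0 by lra.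
have Fxz : (x1 - z1) * (x1 + z1 - 2 * c1) + (x2 - z2) * (x2 + z2 - 2 * c2) = 0 by lra.
have hxy' : (x1 - y1 != 0) || (x2 - y2 != 0) by rewrite !subr_eq0.
have hxz' : (x1 - z1 != 0) || (x2 - z2 != 0) by rewrite !subr_eq0.
have hyz' : (y1 - z1 != 0) || (y2 - z2 != 0) by rewrite !subr_eq0.
have G1 := perp hxy' Exy Fxy.
have G2 := perp hxz' Exz Fxz.
have G3 : (y1 - z1) * (- u2) + (y2 - z2) * u1 = 0 by lra.
have := perp hyz' Eyz G3.
have hu : (u1 != 0) || (u2 != 0) by rewrite /u1 /u2 !subr_eq0 eq_sym (eq_sym e2).
move=> H.
have H' : u1 ^+ 2 + u2 ^+ 2 = 0 by rewrite -H; ring.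
move/eqP: H'; rewrite paddr_eq0 ?sqr_ge0 // !sqrf_eq0.
by move/orP: hu => [] /negPf ->; rewrite ?andbF.
Qed.
Lemma count_le2 (R : realType) (a b : R*R) (da db : R) (s : seq (R*R)) :
  0 < da -> 0 < db -> uniq s -> a != b ->
  (count (fun p => (dist2 a p == da) && (dist2 p b == db)) s <= 2)%N.
Proof.
move=> hda hdb us ab; rewrite -size_filter.
set f := filter _ s.
have uf : uniq f by exact: filter_uniq.
have hf : forall p, p \in f -> (dist2 a p == da) && (dist2 p b == db).
  by move=> p; rewrite mem_filter => /andP[].
move: uf hf; case: f => [|x [|y [|z f']]] //= uf hf.
have [hxy hxz hyz] : [/\ x != y, x != z & y != z].
  by move: uf; rewrite !inE !negb_or => /and4P[/and3P[]] ? ? _ /andP[] ? _ _ _.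
have /andP[/eqP hx /eqP hx'] := hf x (mem_head _ _).
have /andP[/eqP hy /eqP hy'] : _ := hf y ltac:(by rewrite !inE eqxx orbT).
have /andP[/eqP hz /eqP hz'] : _ := hf z ltac:(by rewrite !inE eqxx !orbT).
move: hx hy hz hx' hy' hz'; rewrite /dist2.
clear hf uf. move: ab hxy hxz hyz.
case: a => a1 a2; case: b => b1 b2; case: x => x1 x2; case: y => y1 y2; case: z => z1 z2 /=.
move=> ab hxy hxz hyz hx hy hz hx' hy' hz'.
have sq : forall (t : R), 0 <= t -> forall d, Num.sqrt t = d -> t = d ^+ 2.
  by move=> t ht d <-; rewrite sqr_sqrtr.
have P : forall u v : R, 0 <= u ^+ 2 + v ^+ 2 by move=> u v; rewrite addr_ge0 ?sqr_ge0.
exfalso; exact: (two_circles ab hxy hxz hyz (sq _ (P _ _) _ hx) (sq _ (P _ _) _ hy) (sq _ (P _ _) _ hz)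
  (sq _ (P _ _) _ hx') (sq _ (P _ _) _ hy') (sq _ (P _ _) _ hz')).
Qed.
Lemma pc_sum (R : realType) (d : R) A B :
  pair_count d A B = (\sum_(a <- A) count (fun b => dist2 a b == d) B)%N.
Proof. by rewrite /pair_count count_allpairs_sum. Qed.

Lemma pc_scale (R : realType) (d : R) A B : 0 < d ->
  pair_count d A B =
  pair_count 1 (map (fun p : R * R => (p.1 / d, p.2 / d)) A)
               (map (fun p : R * R => (p.1 / d, p.2 / d)) B).
Proof.
move=> hd; rewrite !pc_sum big_map; apply: eq_bigr => a _.
rewrite count_map; apply: eq_count => b /=.
have hd0 : d != 0 by rewrite gt_eqF.
have E : dist2 (a.1 / d, a.2 / d) (b.1 / d, b.2 / d) = dist2 a b / d.
  rewrite /dist2 /=.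
  have -> : (a.1 / d - b.1 / d) ^+ 2 + (a.2 / d - b.2 / d) ^+ 2 =
     ((a.1 - b.1) ^+ 2 + (a.2 - b.2) ^+ 2) * (d^-1) ^+ 2 by field.
  by rewrite sqrtrM ?addr_ge0 ?sqr_ge0 // sqrtr_sqr ger0_norm // invr_ge0 ltW.
rewrite E; apply/eqP/eqP => [->|h]; first by rewrite divff.
by rewrite -(divfK hd0 (dist2 a b)) h mul1r.
Qed.

Lemma pad (R : realType) (A : seq (R * R)) n : uniq A -> (size A <= n)%N ->
  exists E, uniq (A ++ E) /\ size (A ++ E) = n.
Proof.
move=> uA hA.
set M : R := 1 + \sum_(p <- A) `|p.1|.
have hM : forall p, p \in A -> `|p.1| < M.
  have : forall p, p \in A -> `|p.1| <= \sum_(p <- A) `|p.1|.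
    elim: A {uA hA M} => [|q A IH] p //; rewrite inE big_cons => /orP [/eqP ->|/IH h].
      by rewrite lerDl sumr_ge0.
    by rewrite (le_trans h) // lerDr.
  by move=> h p /h hp; rewrite /M (le_lt_trans hp) // ltrDr.
exists [seq (M + i%:R, 0) | i <- iota 0 (n - size A)].
split; last by rewrite size_cat size_map size_iota subnKC.
rewrite cat_uniq uA /=; apply/andP; split.
  apply/hasPn => e /mapP [i _ ->]; apply/negP => /hM /=.
  have M0 : 0 <= M by rewrite /M addr_ge0 ?sumr_ge0.
  rewrite ger0_norm; last exact: addr_ge0 M0 (ler0n _ _).
  by rewrite ltNge lerDl ler0n.
rewrite map_inj_uniq ?iota_uniq // => i j [] /addrI /eqP.
by rewrite eqr_nat => /eqP.
Qed.
Lemma pc_cat (R : realType) (d : R) A E B F :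
  (pair_count d A B <= pair_count d (A ++ E) (B ++ F))%N.
Proof.
rewrite !pc_sum big_cat /=; apply: leq_trans (leq_addr _ _).
by apply: leq_sum => a _; rewrite count_cat leq_addr.
Qed.

Lemma pc_le_u2 (R : realType) (d : R) n A B : 0 < d -> uniq A -> uniq B ->
  (size A <= n)%N -> (size B <= n)%N -> (pair_count d A B)%:R <= u2 R n n.
Proof.
move=> hd uA uB hA hB.
set f := fun p : R * R => (p.1 / d, p.2 / d).
have finj : injective f.
  move=> p q [] h1 h2; have hd0 : d != 0 by rewrite gt_eqF.
  by case: p q h1 h2 => p1 p2 [q1 q2] /= /(mulIf (invr_neq0 hd0)) -> /(mulIf (invr_neq0 hd0)) ->.
have uA' : uniq (map f A) by rewrite map_inj_uniq.
have uB' : uniq (map f B) by rewrite map_inj_uniq.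
have hA' : (size (map f A) <= n)%N by rewrite size_map.
have [E [uE sE]] := pad uA' hA'.
have hB' : (size (map f B) <= n)%N by rewrite size_map.
have [F [uF sF]] := pad uB' hB'.
rewrite (pc_scale _ _ hd).
apply: le_trans (_ : (pair_count 1 (map f A ++ E) (map f B ++ F))%:R <= _).
  by rewrite ler_nat pc_cat.
apply: sup_upper_bound.
  split.
    by exists (pair_count 1 (map f A ++ E) (map f B ++ F))%:R, (map f A ++ E), (map f B ++ F).
  exists (n * n)%:R => x [A' [B' [_ _ sA' sB' ->]]].
  rewrite ler_nat /pair_count (leq_trans (count_size _ _)) //.
  by rewrite size_allpairs sA' sB'.
by exists (map f A ++ E), (map f B ++ F).
Qed.
Lemma C4_le (R : realType) (d1 d2 d3 d4 : R) R1 R2 R3 R4 R5 :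
  0 < d2 -> 0 < d3 -> uniq R3 ->
  (C4 d1 d2 d3 d4 R1 R2 R3 R4 R5 <= 2 * pair_count d1 R1 R2 * pair_count d4 R4 R5)%N.
Proof.
move=> hd2 hd3 u3.
rewrite /C4 count_allpairs_sum pc_sum mulnAC mulnC big_distrl /=.
apply: leq_sum => p1 _; rewrite count_allpairs_sum count_sumb big_distrl /=.
apply: leq_sum => p2 _.
case/boolP: (dist2 p1 p2 == d1) => h1; last first.
  rewrite mul0n leqn0 (@eq_count _ _ pred0) ?count_pred0 //.
  by move=> -[|p3 [|p4 [|p5 [|? ?]]]] //=; rewrite (negPf h1).
rewrite mul1n count_allpairs_sum.
under eq_bigr => p3 _ do rewrite count_allpairs_sum.
under eq_bigr => p3 _ do under eq_bigr => p4 _ do rewrite count_map count_sumb.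
apply: (@leq_trans (\sum_(p3 <- R3) \sum_(p4 <- R4) \sum_(p5 <- R5)
   (((p2 != p4) && (dist2 p2 p3 == d2) && (dist2 p3 p4 == d3)) * (dist2 p4 p5 == d4)))%N).
  apply: leq_sum => p3 _; apply: leq_sum => p4 _; apply: leq_sum => p5 _ /=.
  case: (dist2 p2 p3 == d2); case: (dist2 p3 p4 == d3); case: (dist2 p4 p5 == d4);
    rewrite /= ?andbF //.
  case: (p2 =P p4) => [->|_]; last by rewrite leq_b1.
  by rewrite !inE eqxx /= !orbT /= !andbF.
rewrite exchange_big /=.
under eq_bigr => p4 _ do rewrite exchange_big /=.
rewrite pc_sum big_distrr /=; apply: leq_sum => p4 _.
rewrite count_sumb big_distrr /=; apply: leq_sum => p5 _.
rewrite -big_distrl /= leq_mul //.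
case: eqP => [<-|/eqP ne].
  by rewrite big1 // => p3 _; rewrite eqxx.
rewrite -count_sumb (leq_trans _ (count_le2 hd2 hd3 u3 ne)) //.
Qed.

Theorem lemma3p5 (R : realType) (d1 d2 d3 d4 : R)
  (hd1 : 0 < d1) (hd2 : 0 < d2) (hd3 : 0 < d3) (hd4 : 0 < d4) (K : R) :
  exists C : R, forall (n : nat) (R1 R2 R3 R4 R5 : seq (R * R)),
    uniq R1 -> uniq R2 -> uniq R3 -> uniq R4 -> uniq R5 ->
    (size R1 <= n)%N -> (size R2 <= n)%N -> (size R3 <= n)%N ->
    (size R4 <= n)%N -> (size R5 <= n)%N ->
    ((pair_count d1 R1 R2)%:R <= K * n%:R \/
     (pair_count d4 R4 R5)%:R <= K * n%:R) ->
    (C4 d1 d2 d3 d4 R1 R2 R3 R4 R5)%:R <= C * n%:R * u2 R n n.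
Proof.
exists (2 * K) => n R1 R2 R3 R4 R5 u1 u2' u3 u4 u5 s1 s2 s3 s4 s5 h.
have hC := C4_le d1 d4 R1 R2 R4 R5 hd2 hd3 u3.
have hC' : (C4 d1 d2 d3 d4 R1 R2 R3 R4 R5)%:R <=
    2 * (pair_count d1 R1 R2)%:R * (pair_count d4 R4 R5)%:R :> R.
  by rewrite -[2 : R]/(2%:R) -!natrM ler_nat.
have p1 := ler0n R (pair_count d1 R1 R2).
have p4 := ler0n R (pair_count d4 R4 R5).
have hu1 := pc_le_u2 hd1 u1 u2' s1 s2.
have hu4 := pc_le_u2 hd4 u4 u5 s4 s5.
set a := (pair_count d1 R1 R2)%:R in hC' p1 hu1 *.
set b := (pair_count d4 R4 R5)%:R in hC' p4 hu4 *.
set u := u2 R n n in hu1 hu4 *.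
set kn := K * n%:R in h *.
have -> : 2 * K * n%:R * u = 2 * kn * u by rewrite /kn; ring.
case: h => h.
- have Kn : 0 <= kn by apply: le_trans h.
  have e1 : 0 <= kn - a by rewrite subr_ge0.
  have e2 : 0 <= u - b by rewrite subr_ge0.
  have := mulr_ge0 e1 p4.
  have := mulr_ge0 Kn e2.
  lra.
- have Kn : 0 <= kn by apply: le_trans h.
  have e1 : 0 <= kn - b by rewrite subr_ge0.
  have e2 : 0 <= u - a by rewrite subr_ge0.
  have := mulr_ge0 e1 p1.
  have := mulr_ge0 Kn e2.
  lra.
Qed.
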